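(* Let $T\in\mathcal{B}(\mathbb{C}^d)$ be power bounded. Then the limit $A_{T,C}:=\lim_{n\to\infty}\frac1n\sum_{j=1}^nT^{*j}T^j$ exists (in norm), and $A_{T,L}=A_{T,C}$ for every Banach limit $L$. Conversely, if the sequence $\frac1n\sum_{j=1}^nT^{*j}T^j$ converges for a matrix $T$, then $T$ is power bounded.
   Context: $T$ is power bounded if $\sup_n\|T^n\|<\infty$. A Banach limit is a linear functional $L$ on $\ell^\infty(\mathbb{N})$, written $\operatorname{L-lim}$, with $\|L\|=1$, agreeing with the ordinary limit on convergent sequences, positive, and shift-invariant ($\operatorname{L-lim}x_n=\operatorname{L-lim}x_{n+1}$). For power bounded $T$, $A_{T,L}$ is the positive operator with $\langle A_{T,L}x,y\rangle=\operatorname{L-lim}_n\langle T^{*n}T^nx,y\rangle$. *)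

(* Defs.v *)
From Stdlib Require Import Reals.
Open Scope R_scope.

Definition Cplx : Type := (R * R)%type.
Definition C0 : Cplx := (0, 0).
Definition C1 : Cplx := (1, 0).
Definition Cadd (z w : Cplx) : Cplx := (fst z + fst w, snd z + snd w).
Definition Copp (z : Cplx) : Cplx := (- fst z, - snd z).
Definition Csub (z w : Cplx) : Cplx := Cadd z (Copp w).
Definition Cmul (z w : Cplx) : Cplx :=
  (fst z * fst w - snd z * snd w, fst z * snd w + snd z * fst w).
Definition Cconj (z : Cplx) : Cplx := (fst z, - snd z).
Definition RtoC (r : R) : Cplx := (r, 0).
Definition Cnorm (z : Cplx) : R := sqrt (fst z * fst z + snd z * snd z).

Fixpoint csum (n : nat) (f : nat -> Cplx) : Cplx :=
  match n with O => C0 | S k => Cadd (csum k f) (f k) end.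

(* ---------- vectors of Cplx^d and d x d matrices (indices < d are used) ---------- *)
Definition Vec := nat -> Cplx.
Definition Mat := nat -> nat -> Cplx.

Definition mat_vec (d : nat) (A : Mat) (x : Vec) : Vec :=
  fun i => csum d (fun j => Cmul (A i j) (x j)).
Definition mmul (d : nat) (A B : Mat) : Mat :=
  fun i k => csum d (fun j => Cmul (A i j) (B j k)).
Definition madd (A B : Mat) : Mat := fun i j => Cadd (A i j) (B i j).
Definition msub (A B : Mat) : Mat := fun i j => Csub (A i j) (B i j).
Definition mscale (a : Cplx) (A : Mat) : Mat := fun i j => Cmul a (A i j).
Definition mzero : Mat := fun _ _ => C0.
Definition mid : Mat := fun i j => if Nat.eqb i j then C1 else C0.
Definition madj (A : Mat) : Mat := fun i j => Cconj (A j i).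
Fixpoint mpow (d : nat) (A : Mat) (n : nat) : Mat :=
  match n with O => mid | S k => mmul d A (mpow d A k) end.

Definition inner (d : nat) (x y : Vec) : Cplx :=
  csum d (fun i => Cmul (x i) (Cconj (y i))).
Definition vnorm (d : nat) (x : Vec) : R :=
  sqrt (fst (inner d x x)).

Definition opnorm_le (d : nat) (A : Mat) (M : R) : Prop :=
  forall x : Vec, vnorm d (mat_vec d A x) <= M * vnorm d x.

Definition power_bounded (d : nat) (T : Mat) : Prop :=
  exists M : R, forall n : nat, opnorm_le d (mpow d T n) M.

Definition mat_cv_norm (d : nat) (An : nat -> Mat) (A : Mat) : Prop :=
  forall eps : R, eps > 0 -> exists N : nat, forall n : nat, (n >= N)%nat ->
    opnorm_le d (msub (An n) A) eps.

Fixpoint msum (n : nat) (F : nat -> Mat) : Mat :=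
  match n with O => mzero | S k => madd (msum k F) (F k) end.
Definition cesaro (d : nat) (T : Mat) (n : nat) : Mat :=
  mscale (RtoC (/ INR n))
    (msum n (fun k => mmul d (mpow d (madj T) (S k)) (mpow d T (S k)))).

Definition bounded_seq (s : nat -> Cplx) : Prop :=
  exists M : R, forall n, Cnorm (s n) <= M.
Definition Ccv (s : nat -> Cplx) (l : Cplx) : Prop :=
  forall eps : R, eps > 0 -> exists N : nat, forall n : nat, (n >= N)%nat ->
    Cnorm (Csub (s n) l) < eps.

Record BanachLimit (L : (nat -> Cplx) -> Cplx) : Prop := {
  bl_linear : forall (a : Cplx) (s t : nat -> Cplx), bounded_seq s -> bounded_seq t ->
      L (fun n => Cadd (Cmul a (s n)) (t n)) = Cadd (Cmul a (L s)) (L t);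
  (* ||L|| <= 1; together with bl_limit on the constant 1 this gives ||L|| = 1 *)
  bl_norm : forall (s : nat -> Cplx) (M : R), (forall n, Cnorm (s n) <= M) ->
      Cnorm (L s) <= M;
  bl_limit : forall (s : nat -> Cplx) (l : Cplx), Ccv s l -> L s = l;
  bl_positive : forall s : nat -> Cplx, bounded_seq s ->
      (forall n, snd (s n) = 0 /\ 0 <= fst (s n)) ->
      snd (L s) = 0 /\ 0 <= fst (L s);
  bl_shift : forall s : nat -> Cplx, bounded_seq s -> L (fun n => s (S n)) = L s
}.

(* Main.v *)
Require Import Defs.
From Stdlib Require Import Reals.
Open Scope R_scope.
From Stdlib Require Import Reals Lra Lia Psatz FunctionalExtensionality ClassicalEpsilon Classical ZArith List.
Require Import Defs.
Open Scope R_scope.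

Lemma Ceq (z w : Cplx) : fst z = fst w -> snd z = snd w -> z = w.
Proof. destruct z, w; simpl; intros; subst; reflexivity. Qed.

Ltac cunf := unfold Csub, Cadd, Cmul, Copp, Cconj, RtoC, C0, C1 in *; simpl in *.
Ltac cring := apply Ceq; cunf; ring.

Fixpoint rsum (n : nat) (f : nat -> R) : R :=
  match n with O => 0 | S k => rsum k f + f k end.

Lemma fst_csum n f : fst (csum n f) = rsum n (fun k => fst (f k)).
Proof. induction n; simpl; [reflexivity|rewrite IHn; reflexivity]. Qed.
Lemma snd_csum n f : snd (csum n f) = rsum n (fun k => snd (f k)).
Proof. induction n; simpl; [reflexivity|rewrite IHn; reflexivity]. Qed.

Lemma csum_ext n f g : (forall k, (k < n)%nat -> f k = g k) -> csum n f = csum n g.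
Proof. induction n; intros H; simpl; auto. rewrite IHn by (intros; apply H; lia). rewrite H by lia; auto. Qed.
Lemma rsum_ext n f g : (forall k, (k < n)%nat -> f k = g k) -> rsum n f = rsum n g.
Proof. induction n; intros H; simpl; auto. rewrite IHn by (intros; apply H; lia). rewrite H by lia; auto. Qed.

Lemma csum_add n f g : csum n (fun k => Cadd (f k) (g k)) = Cadd (csum n f) (csum n g).
Proof. induction n; simpl. cring. rewrite IHn. cring. Qed.
Lemma csum_sub n f g : csum n (fun k => Csub (f k) (g k)) = Csub (csum n f) (csum n g).
Proof. induction n; simpl. cring. rewrite IHn. cring. Qed.
Lemma csum_scal n a f : csum n (fun k => Cmul a (f k)) = Cmul a (csum n f).
Proof. induction n; simpl. cring. rewrite IHn. cring. Qed.
Lemma csum_scal_r n a f : csum n (fun k => Cmul (f k) a) = Cmul (csum n f) a.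
Proof. induction n; simpl. cring. rewrite IHn. cring. Qed.
Lemma csum_conj n f : csum n (fun k => Cconj (f k)) = Cconj (csum n f).
Proof. induction n; simpl. cring. rewrite IHn. cring. Qed.
Lemma csum_zero n : csum n (fun _ => C0) = C0.
Proof. induction n; simpl. auto. rewrite IHn. cring. Qed.
Lemma csum_swap n m f : csum n (fun i => csum m (fun j => f i j)) = csum m (fun j => csum n (fun i => f i j)).
Proof. induction n; simpl. symmetry; apply csum_zero. rewrite IHn. rewrite <- csum_add. reflexivity. Qed.
Lemma csum_delta n j g : csum n (fun k => if Nat.eqb k j then g k else C0) = if Nat.ltb j n then g j else C0.
Proof. induction n; simpl. destruct j; reflexivity. rewrite IHn.
 destruct (Nat.eqb n j) eqn:E.
 - apply Nat.eqb_eq in E; subst. replace (Nat.ltb j j) with false by (symmetry; apply Nat.ltb_ge; lia).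
   replace (Nat.ltb j (S j)) with true by (symmetry; apply Nat.ltb_lt; lia). cring.
 - apply Nat.eqb_neq in E. destruct (Nat.ltb j n) eqn:E2.
   + apply Nat.ltb_lt in E2. replace (Nat.ltb j (S n)) with true by (symmetry; apply Nat.ltb_lt; lia). cring.
   + apply Nat.ltb_ge in E2. replace (Nat.ltb j (S n)) with false by (symmetry; apply Nat.ltb_ge; lia). cring.
Qed.

Lemma rsum_le n f g : (forall k, (k < n)%nat -> f k <= g k) -> rsum n f <= rsum n g.
Proof. induction n; intros H; simpl. lra. specialize (IHn (fun k Hk => H k ltac:(lia))). specialize (H n ltac:(lia)). lra. Qed.
Lemma rsum_nonneg n f : (forall k, (k < n)%nat -> 0 <= f k) -> 0 <= rsum n f.
Proof. intros H. replace 0 with (rsum n (fun _ => 0)). apply rsum_le; auto.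
 induction n; simpl; auto. rewrite IHn; [lra| intros; apply H; lia]. Qed.
Lemma rsum_scal n a f : rsum n (fun k => a * f k) = a * rsum n f.
Proof. induction n; simpl. ring. rewrite IHn. ring. Qed.
Lemma rsum_add n f g : rsum n (fun k => f k + g k) = rsum n f + rsum n g.
Proof. induction n; simpl. ring. rewrite IHn. ring. Qed.
Lemma rsum_const n c : rsum n (fun _ => c) = INR n * c.
Proof. induction n. simpl; ring. cbn [rsum]. rewrite IHn, S_INR. ring. Qed.
Lemma rsum_term n f j : (forall k, (k < n)%nat -> 0 <= f k) -> (j < n)%nat -> f j <= rsum n f.
Proof. induction n; intros H Hj. lia. simpl. destruct (Nat.eq_dec j n).
 subst. assert (0 <= rsum n f) by (apply rsum_nonneg; intros; apply H; lia). lra.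
 assert (f j <= rsum n f) by (apply IHn; [intros; apply H; lia|lia]). specialize (H n ltac:(lia)). lra. Qed.

Lemma Cnorm_nonneg z : 0 <= Cnorm z.
Proof. apply sqrt_pos. Qed.
Lemma Cnorm_sq z : Cnorm z * Cnorm z = fst z * fst z + snd z * snd z.
Proof. unfold Cnorm. apply sqrt_sqrt. nra. Qed.
Lemma Cnorm_mul z w : Cnorm (Cmul z w) = Cnorm z * Cnorm w.
Proof. unfold Cnorm. rewrite <- sqrt_mult by nra. f_equal. cunf. ring. Qed.
Lemma Cnorm_conj z : Cnorm (Cconj z) = Cnorm z.
Proof. unfold Cnorm. cunf. f_equal. ring. Qed.
Lemma Cnorm_opp z : Cnorm (Copp z) = Cnorm z.
Proof. unfold Cnorm. cunf. f_equal. ring. Qed.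
Lemma Cnorm_RtoC r : Cnorm (RtoC r) = Rabs r.
Proof. unfold Cnorm. cunf. rewrite Rmult_0_l, Rplus_0_r. apply sqrt_Rsqr_abs. Qed.
Lemma Cnorm_C0 : Cnorm C0 = 0.
Proof. unfold Cnorm. cunf. rewrite Rmult_0_l, Rplus_0_r. apply sqrt_0. Qed.
Lemma Cnorm_C1 : Cnorm C1 = 1.
Proof. unfold Cnorm. cunf. replace (1*1+0*0) with 1 by ring. apply sqrt_1. Qed.
Lemma fst_le_Cnorm z : Rabs (fst z) <= Cnorm z.
Proof. unfold Cnorm. rewrite <- sqrt_Rsqr_abs. apply sqrt_le_1_alt. unfold Rsqr. nra. Qed.
Lemma snd_le_Cnorm z : Rabs (snd z) <= Cnorm z.
Proof. unfold Cnorm. rewrite <- sqrt_Rsqr_abs. apply sqrt_le_1_alt. unfold Rsqr. nra. Qed.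

Lemma sqrt_le_sq a b : 0 <= b -> a <= b * b -> sqrt a <= b.
Proof. intros Hb H. rewrite <- (sqrt_square b Hb). apply sqrt_le_1_alt. auto. Qed.

Lemma Cnorm_add z w : Cnorm (Cadd z w) <= Cnorm z + Cnorm w.
Proof.
 assert (Hz := Cnorm_sq z). assert (Hw := Cnorm_sq w).
 assert (H0z := Cnorm_nonneg z). assert (H0w := Cnorm_nonneg w).
 destruct z as [a b]; destruct w as [c e]; simpl in *.
 assert (HC: a*c + b*e <= Cnorm (a,b) * Cnorm (c,e)).
 { assert (Hp: (a*c+b*e)*(a*c+b*e) <= (Cnorm (a,b) * Cnorm (c,e)) * (Cnorm (a,b) * Cnorm (c,e))).
   { replace ((Cnorm (a,b) * Cnorm (c,e)) * (Cnorm (a,b) * Cnorm (c,e))) with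
       ((Cnorm (a,b) * Cnorm (a,b)) * (Cnorm (c,e) * Cnorm (c,e))) by ring.
     rewrite Hz, Hw. assert (H := Rle_0_sqr (a*e - b*c)). unfold Rsqr in H. nra. }
   assert (0 <= Cnorm (a,b) * Cnorm (c,e)) by nra. nra. }
 unfold Cnorm at 1. cunf. apply sqrt_le_sq. lra. nra.
Qed.
Lemma Cnorm_sub z w : Cnorm (Csub z w) <= Cnorm z + Cnorm w.
Proof. unfold Csub. rewrite <- (Cnorm_opp w). apply Cnorm_add. Qed.
Lemma Cnorm_sub_sym z w : Cnorm (Csub z w) = Cnorm (Csub w z).
Proof. replace (Csub w z) with (Copp (Csub z w)) by cring. rewrite Cnorm_opp; auto. Qed.
Lemma Cnorm_tri z w u : Cnorm (Csub z u) <= Cnorm (Csub z w) + Cnorm (Csub w u).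
Proof. replace (Csub z u) with (Cadd (Csub z w) (Csub w u)) by cring. apply Cnorm_add. Qed.

Lemma Cnorm_zero z : Cnorm z = 0 -> z = C0.
Proof. intros H. assert (Hs := Cnorm_sq z). rewrite H in Hs. destruct z as [a b]; simpl in *.
 unfold C0; f_equal; nra. Qed.
Lemma Cnorm_small z : (forall e, e > 0 -> Cnorm z <= e) -> z = C0.
Proof. intros H. apply Cnorm_zero. assert (H0 := Cnorm_nonneg z).
 destruct (Req_dec (Cnorm z) 0); auto. specialize (H (Cnorm z / 2) ltac:(lra)). lra. Qed.
Lemma Cnorm_small_eq z w K : (forall e, e > 0 -> Cnorm (Csub z w) <= e * K) -> z = w.
Proof. intros H. assert (Csub z w = C0).
 { apply Cnorm_small. intros e He. destruct (Rle_dec K 0).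
   - specialize (H e He). assert (Hn := Cnorm_nonneg (Csub z w)). nra.
   - specialize (H (e / K) ltac:(apply Rdiv_lt_0_compat; lra)). unfold Rdiv in H.
     rewrite Rmult_assoc, Rinv_l in H by lra. lra. }
 apply Ceq; cunf; inversion H0; lra. Qed.

Lemma Cnorm_csum n f : Cnorm (csum n f) <= rsum n (fun k => Cnorm (f k)).
Proof. induction n; simpl. rewrite Cnorm_C0; lra. eapply Rle_trans. apply Cnorm_add. lra. Qed.

Lemma cs_aux S A B : 0 <= A -> 0 <= B -> (forall t, t > 0 -> S <= (t * A + B / t) / 2) -> S <= sqrt A * sqrt B.
Proof.
 intros HA HB H.
 assert (sA := sqrt_sqrt A HA). assert (sB := sqrt_sqrt B HB).
 assert (pA := sqrt_pos A). assert (pB := sqrt_pos B).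
 destruct (Req_dec (sqrt A) 0) as [E|E].
 - rewrite E, Rmult_0_l. destruct (Rle_dec S 0); auto.
   assert (A = 0) by nra. subst.
   specialize (H ((B + 1) / S) ltac:(apply Rdiv_lt_0_compat; lra)).
   assert (B / ((B+1)/S) = B * S / (B+1)) by (field; lra). rewrite H0 in H.
   assert (B * S / (B+1) < S + S). { apply Rmult_lt_reg_r with (B+1). lra. unfold Rdiv. rewrite Rmult_assoc, Rinv_l by lra. nra. }
   lra.
 - destruct (Req_dec (sqrt B) 0) as [E2|E2].
   + rewrite E2, Rmult_0_r. destruct (Rle_dec S 0); auto.
     assert (B = 0) by nra. subst.
     specialize (H (S / (A + 1)) ltac:(apply Rdiv_lt_0_compat; lra)).
     assert (S / (A + 1) * A < S + S). { apply Rmult_lt_reg_r with (A+1). lra. unfold Rdiv.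
       replace (S * / (A + 1) * A * (A + 1)) with (S * A * ((A+1) * / (A+1))) by ring. rewrite Rinv_r by lra. nra. }
     unfold Rdiv in H. rewrite Rmult_0_l, Rplus_0_r in H. lra.
   + specialize (H (sqrt B / sqrt A) ltac:(apply Rdiv_lt_0_compat; lra)).
     replace (sqrt B / sqrt A * A + B / (sqrt B / sqrt A)) with (2 * (sqrt A * sqrt B)) in H. lra.
     set (sa := sqrt A) in *. set (sb := sqrt B) in *. rewrite <- sA, <- sB. field. lra.
Qed.

Lemma rsum_cs n a b : rsum n (fun k => a k * b k) <= sqrt (rsum n (fun k => a k * a k)) * sqrt (rsum n (fun k => b k * b k)).
Proof.
 apply cs_aux. apply rsum_nonneg; intros; nra. apply rsum_nonneg; intros; nra.
 intros t Ht. unfold Rdiv. rewrite <- rsum_scal, <- (Rmult_comm (/t)), <- rsum_scal, <- rsum_add.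
 rewrite Rmult_comm, <- rsum_scal. apply rsum_le. intros k _.
 assert (Hq := Rle_0_sqr (t * a k - b k)); unfold Rsqr in Hq.
 assert (/ 2 * (t * (a k * a k) + / t * (b k * b k)) - a k * b k = / (2*t) * ((t * a k - b k) * (t * a k - b k))) by (field; lra).
 assert (0 <= / (2*t)) by (apply Rlt_le, Rinv_0_lt_compat; lra). nra.
Qed.

Section Vec.
Variable d : nat.

Definition veq (u v : Vec) := forall i, (i < d)%nat -> u i = v i.

Lemma inner_ext u u' y y' : veq u u' -> veq y y' -> inner d u y = inner d u' y'.
Proof. intros H1 H2. unfold inner. apply csum_ext. intros k Hk. rewrite H1, H2 by auto. auto. Qed.
Lemma mat_vec_ext A x x' : veq x x' -> mat_vec d A x = mat_vec d A x'.
Proof. intros H. extensionality i. unfold mat_vec. apply csum_ext. intros k Hk. rewrite H by auto. auto. Qed.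

Lemma fst_inner_self x : fst (inner d x x) = rsum d (fun i => Cnorm (x i) * Cnorm (x i)).
Proof. unfold inner. rewrite fst_csum. apply rsum_ext. intros k _. rewrite Cnorm_sq. cunf. ring. Qed.
Lemma snd_inner_self x : snd (inner d x x) = 0.
Proof. unfold inner. rewrite snd_csum. transitivity (rsum d (fun _ => 0)). apply rsum_ext. intros; cunf; ring.
 clear. induction d; simpl; auto. rewrite IHn; ring. Qed.
Lemma fst_inner_nonneg x : 0 <= fst (inner d x x).
Proof. rewrite fst_inner_self. apply rsum_nonneg. intros. assert (H0 := Cnorm_nonneg (x k)). nra. Qed.
Lemma vnorm_nonneg x : 0 <= vnorm d x.
Proof. apply sqrt_pos. Qed.
Lemma vnorm_sq x : vnorm d x * vnorm d x = fst (inner d x x).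
Proof. apply sqrt_sqrt, fst_inner_nonneg. Qed.
Lemma inner_self x : inner d x x = RtoC (vnorm d x * vnorm d x).
Proof. apply Ceq. rewrite vnorm_sq. cunf. auto. rewrite snd_inner_self. cunf; auto. Qed.
Lemma vnorm_ext u v : veq u v -> vnorm d u = vnorm d v.
Proof. intros H. unfold vnorm. rewrite (inner_ext u v u v) by auto. auto. Qed.
Lemma coord_le x i : (i < d)%nat -> Cnorm (x i) <= vnorm d x.
Proof. intros Hi. unfold vnorm. rewrite fst_inner_self. rewrite <- (sqrt_square (Cnorm (x i))) by apply Cnorm_nonneg.
 apply sqrt_le_1_alt. apply (rsum_term d (fun i => Cnorm (x i) * Cnorm (x i))); auto.
 intros. assert (H0 := Cnorm_nonneg (x k)). nra. Qed.

Lemma inner_cs x y : Cnorm (inner d x y) <= vnorm d x * vnorm d y.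
Proof. assert (E: vnorm d x * vnorm d y = sqrt (rsum d (fun i => Cnorm (x i) * Cnorm (x i))) * sqrt (rsum d (fun i => Cnorm (y i) * Cnorm (y i))))
  by (unfold vnorm; rewrite !fst_inner_self; auto). rewrite E.
 unfold inner. eapply Rle_trans. apply Cnorm_csum.
 eapply Rle_trans; [|apply (rsum_cs d (fun i => Cnorm (x i)) (fun i => Cnorm (y i)))].
 apply rsum_le. intros. rewrite Cnorm_mul, Cnorm_conj. lra. Qed.

Lemma mat_vec_mmul A B x : mat_vec d (mmul d A B) x = mat_vec d A (mat_vec d B x).
Proof. extensionality i. unfold mat_vec, mmul.
 transitivity (csum d (fun k => csum d (fun j => Cmul (A i j) (Cmul (B j k) (x k))))).
 apply csum_ext; intros. rewrite <- csum_scal_r. apply csum_ext; intros. cring.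
 rewrite csum_swap. apply csum_ext; intros. rewrite <- csum_scal. auto. Qed.

Lemma mat_vec_mid x : veq (mat_vec d mid x) x.
Proof. intros i Hi. unfold mat_vec, mid.
 transitivity (csum d (fun k => if Nat.eqb k i then x k else C0)).
 apply csum_ext; intros k _. rewrite Nat.eqb_sym. destruct (Nat.eqb k i); cring.
 rewrite csum_delta. replace (Nat.ltb i d) with true by (symmetry; apply Nat.ltb_lt; auto). auto. Qed.

Lemma inner_adj A u y : inner d (mat_vec d (madj A) u) y = inner d u (mat_vec d A y).
Proof. unfold inner, mat_vec, madj.
 transitivity (csum d (fun i => csum d (fun j => Cmul (Cconj (A j i)) (Cmul (u j) (Cconj (y i)))))).
 apply csum_ext; intros. rewrite <- csum_scal_r. apply csum_ext; intros. cring.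
 rewrite csum_swap. apply csum_ext; intros. rewrite <- csum_conj, <- csum_scal. apply csum_ext; intros. cring. Qed.

Lemma inner_madd A B x y : inner d (mat_vec d (madd A B) x) y = Cadd (inner d (mat_vec d A x) y) (inner d (mat_vec d B x) y).
Proof. unfold inner, mat_vec, madd. rewrite <- csum_add. apply csum_ext; intros k _.
 rewrite (csum_ext _ _ (fun j => Cadd (Cmul (A k j) (x j)) (Cmul (B k j) (x j)))) by (intros; cring).
 rewrite csum_add. cring. Qed.
Lemma inner_msub A B x y : inner d (mat_vec d (msub A B) x) y = Csub (inner d (mat_vec d A x) y) (inner d (mat_vec d B x) y).
Proof. unfold inner, mat_vec, msub. rewrite <- csum_sub. apply csum_ext; intros k _.
 rewrite (csum_ext _ _ (fun j => Csub (Cmul (A k j) (x j)) (Cmul (B k j) (x j)))) by (intros; cring).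
 rewrite csum_sub. cring. Qed.
Lemma inner_mscale a A x y : inner d (mat_vec d (mscale a A) x) y = Cmul a (inner d (mat_vec d A x) y).
Proof. unfold inner, mat_vec, mscale. rewrite <- csum_scal. apply csum_ext; intros k _.
 rewrite (csum_ext _ _ (fun j => Cmul a (Cmul (A k j) (x j)))) by (intros; cring).
 rewrite csum_scal. cring. Qed.
Lemma inner_mzero x y : inner d (mat_vec d mzero x) y = C0.
Proof. unfold inner, mat_vec, mzero. transitivity (csum d (fun _ => C0)); [|apply csum_zero]. apply csum_ext; intros.
 rewrite (csum_ext _ _ (fun _ => C0)) by (intros; cring). rewrite csum_zero. cring. Qed.
End Vec.

Section Mat.
Variable d : nat.

Lemma inner_msum n F x y : inner d (mat_vec d (msum n F) x) y = csum n (fun k => inner d (mat_vec d (F k) x) y).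
Proof. induction n; simpl. apply inner_mzero. rewrite inner_madd, IHn. auto. Qed.

Definition it (T : Mat) (k : nat) (x : Vec) : Vec := Nat.iter k (mat_vec d T) x.

Lemma it_S T k x : it T (S k) x = mat_vec d T (it T k x).
Proof. reflexivity. Qed.
Lemma it_S_r T k x : it T (S k) x = it T k (mat_vec d T x).
Proof. unfold it. apply Nat.iter_succ_r. Qed.
Lemma it_add T k m x : it T (k + m) x = it T k (it T m x).
Proof. unfold it. apply Nat.iter_add. Qed.

Lemma mpow_it T k x : veq d (mat_vec d (mpow d T k) x) (it T k x).
Proof. induction k; cbn [mpow]. apply mat_vec_mid. intros i Hi. rewrite mat_vec_mmul.
 rewrite (mat_vec_ext d T _ (it T k x)) by auto. reflexivity. Qed.

Lemma inner_pow_adj T k u y : inner d (mat_vec d (mpow d (madj T) k) u) y = inner d u (it T k y).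
Proof. revert u y. induction k; intros u y; cbn [mpow].
 apply inner_ext. apply mat_vec_mid. intros i _; auto.
 rewrite mat_vec_mmul, inner_adj, IHk, it_S_r. auto. Qed.

Lemma key_inner T k x y : inner d (mat_vec d (mmul d (mpow d (madj T) k) (mpow d T k)) x) y = inner d (it T k x) (it T k y).
Proof. rewrite mat_vec_mmul, inner_pow_adj. apply inner_ext. apply mpow_it. intros i _; auto. Qed.

Definition gam (T : Mat) (n : nat) (x y : Vec) : Cplx :=
  Cmul (RtoC (/ INR n)) (csum n (fun k => inner d (it T (S k) x) (it T (S k) y))).

Lemma cesaro_inner T n x y : inner d (mat_vec d (cesaro d T n) x) y = gam T n x y.
Proof. unfold cesaro, gam. rewrite inner_mscale, inner_msum. f_equal. apply csum_ext; intros. apply key_inner. Qed.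

Definition ev (j : nat) : Vec := fun l => if Nat.eqb l j then C1 else C0.

Lemma entry A i j : (i < d)%nat -> (j < d)%nat -> inner d (mat_vec d A (ev j)) (ev i) = A i j.
Proof. intros Hi Hj. unfold inner.
 transitivity (csum d (fun l => if Nat.eqb l i then mat_vec d A (ev j) l else C0)).
 apply csum_ext; intros l _. unfold ev. destruct (Nat.eqb l i); cring.
 rewrite csum_delta. replace (Nat.ltb i d) with true by (symmetry; apply Nat.ltb_lt; auto).
 unfold mat_vec. transitivity (csum d (fun l => if Nat.eqb l j then A i l else C0)).
 apply csum_ext; intros l _. unfold ev. destruct (Nat.eqb l j); cring.
 rewrite csum_delta. replace (Nat.ltb j d) with true by (symmetry; apply Nat.ltb_lt; auto). auto. Qed.

Lemma vnorm_ev j : (j < d)%nat -> vnorm d (ev j) = 1.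
Proof. intros Hj. unfold vnorm. rewrite <- sqrt_1. f_equal. unfold inner. rewrite fst_csum.
 transitivity (fst (csum d (fun l => if Nat.eqb l j then C1 else C0))).
 rewrite fst_csum. apply rsum_ext; intros l _. unfold ev. destruct (Nat.eqb l j); cunf; ring.
 rewrite csum_delta. replace (Nat.ltb j d) with true by (symmetry; apply Nat.ltb_lt; auto). auto. Qed.

Lemma entry_bound A dl x y : (forall i j, (i < d)%nat -> (j < d)%nat -> Cnorm (A i j) <= dl) ->
  Cnorm (inner d (mat_vec d A x) y) <= INR d * INR d * dl * vnorm d x * vnorm d y.
Proof. intros H. unfold inner. eapply Rle_trans. apply Cnorm_csum.
 eapply Rle_trans. apply (rsum_le _ _ (fun _ => INR d * dl * vnorm d x * vnorm d y)).
 - intros i Hi. rewrite Cnorm_mul, Cnorm_conj. apply Rmult_le_compat.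
   apply Cnorm_nonneg. apply Cnorm_nonneg. 2: apply coord_le; auto.
   unfold mat_vec. eapply Rle_trans. apply Cnorm_csum.
   eapply Rle_trans. apply (rsum_le _ _ (fun _ => dl * vnorm d x)).
   + intros j Hj. rewrite Cnorm_mul. apply Rmult_le_compat; auto using Cnorm_nonneg, coord_le.
   + rewrite rsum_const. lra.
 - rewrite rsum_const. lra. Qed.

Lemma form_to_op B e : 0 <= e -> (forall x y, Cnorm (inner d (mat_vec d B x) y) <= e * vnorm d x * vnorm d y) -> opnorm_le d B e.
Proof. intros He H x. specialize (H x (mat_vec d B x)). rewrite inner_self, Cnorm_RtoC in H.
 set (v := vnorm d (mat_vec d B x)) in *. assert (Hv: 0 <= v) by apply vnorm_nonneg.
 assert (Hx := vnorm_nonneg d x). rewrite Rabs_right in H by nra.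
 destruct (Req_dec v 0). rewrite H0. nra. 
 apply Rmult_le_reg_r with v. lra. lra. Qed.

Lemma mat_bounded A : exists K, 0 <= K /\ opnorm_le d A K.
Proof. set (dl := rsum d (fun i => rsum d (fun j => Cnorm (A i j)))).
 assert (Hdl : forall i j, (i < d)%nat -> (j < d)%nat -> Cnorm (A i j) <= dl).
 { intros i j Hi Hj. unfold dl. eapply Rle_trans; [|apply (rsum_term d (fun i => rsum d (fun j => Cnorm (A i j))) i)]; auto.
   apply (rsum_term d (fun j => Cnorm (A i j))); auto. intros; apply Cnorm_nonneg.
   intros; apply rsum_nonneg; intros; apply Cnorm_nonneg. }
 assert (0 <= dl) by (apply rsum_nonneg; intros; apply rsum_nonneg; intros; apply Cnorm_nonneg).
 exists (INR d * INR d * dl). split. assert (0 <= INR d) by apply pos_INR. nra.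
 apply form_to_op. assert (0 <= INR d) by apply pos_INR. nra.
 intros. apply entry_bound; auto. Qed.

Lemma op_inner B K x y : opnorm_le d B K -> Cnorm (inner d (mat_vec d B x) y) <= K * vnorm d x * vnorm d y.
Proof. intros H. eapply Rle_trans. apply inner_cs. apply Rmult_le_compat_r. apply vnorm_nonneg. apply H. Qed.

End Mat.

Lemma sq_le a b : 0 <= a -> 0 <= b -> a * a <= b * b -> a <= b.
Proof. intros. destruct (Rle_dec a b); auto. assert (b < a) by lra. assert (b * b < a * a) by nra. lra. Qed.

Lemma rsum_shift n f : rsum (S n) f = f 0%nat + rsum n (fun k => f (S k)).
Proof. induction n; simpl in *. ring. rewrite IHn. ring. Qed.

Lemma rsum_lt n f g : (1 <= n)%nat -> (forall k, (k < n)%nat -> f k < g k) -> rsum n f < rsum n g.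
Proof. induction n; intros Hn H. lia. simpl. destruct n. simpl. specialize (H 0%nat ltac:(lia)). lra.
 specialize (IHn ltac:(lia) (fun k Hk => H k ltac:(lia))). specialize (H (S n) ltac:(lia)). lra. Qed.

Lemma avg_exists n f c : (1 <= n)%nat -> / INR n * rsum n f <= c -> exists j, (j < n)%nat /\ f j <= c.
Proof. intros Hn H. destruct (classic (exists j, (j < n)%nat /\ f j <= c)) as [E|E]; auto.
 exfalso. assert (Hl : rsum n (fun _ => c) < rsum n f).
 { apply rsum_lt; auto. intros k Hk. destruct (Rle_dec (f k) c); [exfalso; apply E; eauto|lra]. }
 rewrite rsum_const in Hl. assert (Hp: 0 < INR n) by (apply lt_0_INR; lia).
 assert (INR n * (/ INR n * rsum n f) <= INR n * c) by (apply Rmult_le_compat_l; lra).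
 rewrite <- Rmult_assoc, Rinv_r, Rmult_1_l in H0 by lra. lra. Qed.

Lemma abs4 p q r s : Rabs (p + q + r - s) <= Rabs p + Rabs q + Rabs r + Rabs s.
Proof. unfold Rabs; repeat destruct Rcase_abs; lra. Qed.
Lemma abs3 p q r : Rabs (- p + q + r) <= Rabs p + Rabs q + Rabs r.
Proof. unfold Rabs; repeat destruct Rcase_abs; lra. Qed.

Lemma real_small r K : (forall e, e > 0 -> Rabs r <= e * K) -> r = 0.
Proof. intros H. destruct (Req_dec r 0); auto. exfalso. assert (Ha: Rabs r > 0) by (apply Rabs_pos_lt; auto).
 destruct (Rle_dec K 0). specialize (H 1 ltac:(lra)). lra.
 specialize (H (Rabs r / (2 * K)) ltac:(apply Rdiv_lt_0_compat; lra)).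
 replace (Rabs r / (2 * K) * K) with (Rabs r / 2) in H by (field; repeat split; try (intro; lra)). lra. Qed.

Section Conv.
Variable d : nat.
Variable T A : Mat.
Hypothesis Hconv : mat_cv_norm d (cesaro d T) A.

Definition q x := fst (inner d (mat_vec d A x) x).
Definition a k x := vnorm d (it d T k x) * vnorm d (it d T k x).
Definition Rn n x := rsum n (fun k => a (S k) x).

Lemma g_eq n x : fst (gam d T n x x) = / INR n * Rn n x.
Proof. unfold gam, Rn. cunf. rewrite fst_csum, snd_csum. unfold a. rewrite Rmult_0_l. unfold Rminus. rewrite Ropp_0, Rplus_0_r.
 f_equal. apply rsum_ext. intros. rewrite vnorm_sq. auto. Qed.

Lemma conv_q e : e > 0 -> exists N, forall n, (n >= N)%nat -> forall x, Rabs (/ INR n * Rn n x - q x) <= e * (vnorm d x * vnorm d x).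
Proof. intros He. destruct (Hconv e He) as [N HN]. exists N. intros n Hn x.
 assert (H := op_inner d _ _ x x (HN n Hn)). rewrite inner_msub, cesaro_inner in H.
 rewrite <- g_eq. unfold q. eapply Rle_trans; [|eapply Rle_trans; [apply H|right; ring]].
 eapply Rle_trans; [|apply fst_le_Cnorm]. right. cunf. reflexivity. Qed.

Lemma Rn_T n x : Rn n (mat_vec d T x) = Rn (S n) x - a 1 x.
Proof. unfold Rn. rewrite rsum_shift.
 assert (rsum n (fun k => a (S k) (mat_vec d T x)) = rsum n (fun k => a (S (S k)) x)) by (apply rsum_ext; intros; unfold a; rewrite <- it_S_r; auto). lra. Qed.

Lemma a_nonneg k x : 0 <= a k x.
Proof. unfold a. assert (H := vnorm_nonneg d (it d T k x)). nra. Qed.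

Lemma q_inv x : q (mat_vec d T x) = q x.
Proof.
 apply Rminus_diag_uniq. apply (real_small _ (vnorm d (mat_vec d T x) * vnorm d (mat_vec d T x) + 1 + 4 * (vnorm d x * vnorm d x))).
 intros e He. destruct (conv_q e He) as [N HN].
 set (X := vnorm d x * vnorm d x). set (Y := vnorm d (mat_vec d T x) * vnorm d (mat_vec d T x)).
 assert (HX : 0 <= X) by (unfold X; assert (H := vnorm_nonneg d x); nra).
 assert (HY : 0 <= Y) by (unfold Y; assert (H := vnorm_nonneg d (mat_vec d T x)); nra).
 set (c := Rabs (q x) + a 1 x). assert (Hc : 0 <= c) by (unfold c; assert (H := a_nonneg 1 x); assert (H' := Rabs_pos (q x)); lra).
 destruct (archimed (c / e)) as [Harch _].
 assert (Hup : (0 <= Z.to_nat (up (c / e)))%nat) by lia.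
 set (n := Nat.max (Nat.max N 1) (Z.to_nat (up (c / e)))).
 assert (HnN : (n >= N)%nat) by lia. assert (Hn1 : (n >= 1)%nat) by lia.
 assert (HnS : (S n >= N)%nat) by lia.
 assert (Hnr : c / e <= INR n).
 { assert (0 <= c / e) by (apply Rmult_le_pos; auto; apply Rlt_le, Rinv_0_lt_compat; lra).
   assert (IZR (up (c / e)) <= INR n).
   { assert (0 <= up (c/e))%Z by (apply le_IZR; lra).
     rewrite <- (Z2Nat.id (up (c/e))) by lia. rewrite <- INR_IZR_INZ. apply le_INR. lia. }
   lra. }
 set (N' := INR n). assert (HN' : 1 <= N') by (unfold N'; apply (le_INR 1); lia).
 assert (H1 := HN (S n) HnS x). assert (H2 := HN n HnN x). assert (H3 := HN n HnN (mat_vec d T x)).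
 fold X in H1, H2. fold Y in H3. rewrite S_INR in H1. fold N' in H1, H2, H3.
 rewrite Rn_T in H3.
 set (r1 := Rn (S n) x) in *. set (r0 := Rn n x) in *. set (a1 := a 1 x) in *.
 set (qT := q (mat_vec d T x)) in *. set (q0 := q x) in *.
 assert (Hce : c <= e * N').
 { unfold Rdiv in Hnr. apply (Rmult_le_compat_l e) in Hnr; [|lra].
   rewrite <- Rmult_assoc, (Rmult_comm e c), Rmult_assoc, Rinv_r, Rmult_1_r in Hnr by lra. exact Hnr. }
 assert (Ec : c = Rabs q0 + a1) by reflexivity.
 assert (Ha1 : 0 <= a1) by apply a_nonneg.
 clearbody c N' r1 r0 a1 qT q0 X Y.
 set (d1 := / (N' + 1) * r1 - q0) in *. set (d2 := / N' * r0 - q0) in *.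
 assert (E : / N' * (r1 - a1) - / N' * r0 = q0 / N' - a1 / N' + d1 + d1 / N' - d2).
 { unfold d1, d2. field; repeat split; try (intro; lra). }
 assert (Hd1 : Rabs (d1 / N') <= Rabs d1).
 { unfold Rdiv. rewrite Rabs_mult, Rabs_inv, (Rabs_right N') by lra.
   assert (0 < / N' <= 1). { split. apply Rinv_0_lt_compat; lra. rewrite <- Rinv_1. apply Rinv_le_contravar; lra. }
   assert (H0 := Rabs_pos d1). nra. }
 assert (Hq : Rabs (q0 / N' - a1 / N') <= e).
 { assert (Hqa : Rabs (q0 / N' - a1 / N') <= c / N').
   { rewrite Ec. replace (q0 / N' - a1 / N') with ((q0 - a1) / N') by (field; repeat split; try (intro; lra)).
     unfold Rdiv. rewrite Rabs_mult, Rabs_inv, (Rabs_right N') by lra. apply Rmult_le_compat_r.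
     apply Rlt_le, Rinv_0_lt_compat; lra. eapply Rle_trans. apply Rabs_triang.
     rewrite Rabs_Ropp, (Rabs_right a1) by lra. lra. }
   eapply Rle_trans. apply Hqa. apply Rmult_le_reg_r with N'. lra. unfold Rdiv. rewrite Rmult_assoc, Rinv_l by lra. lra. }
 assert (Hdiff : Rabs (/ N' * (r1 - a1) - / N' * r0) <= e + 3 * (e * X)).
 { rewrite E. eapply Rle_trans. apply abs4. lra. }
 replace (qT - q0) with (- (/ N' * (r1 - a1) - qT) + (/ N' * (r1 - a1) - / N' * r0) + (/ N' * r0 - q0)) by ring.
 eapply Rle_trans. apply abs3. change (Rabs (/ N' * r0 - q0)) with (Rabs d2). assert (e*(Y+1+4*X) = e*Y + e + 4*(e*X)) by ring. lra.
Qed.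

End Conv.

Lemma pow_bounded_upto d T n0 : exists C, 1 <= C /\ forall i z, (i <= n0)%nat -> vnorm d (it d T i z) <= C * vnorm d z.
Proof. induction n0.
 - exists 1. split. lra. intros i z Hi. replace i with 0%nat by lia. simpl. lra.
 - destruct IHn0 as [C [HC H]]. destruct (mat_bounded d (mpow d T (S n0))) as [K [HK HK2]].
   exists (Rmax C K). split. eapply Rle_trans; [apply HC| apply Rmax_l].
   intros i z Hi. assert (Hz := vnorm_nonneg d z). destruct (Nat.eq_dec i (S n0)).
   + subst. rewrite <- (vnorm_ext d _ _ (mpow_it d T (S n0) z)). eapply Rle_trans. apply HK2.
     apply Rmult_le_compat_r; auto. apply Rmax_r.
   + eapply Rle_trans. apply H. lia. apply Rmult_le_compat_r; auto. apply Rmax_l.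
Qed.

Lemma converse d T : (exists A : Mat, mat_cv_norm d (cesaro d T) A) -> power_bounded d T.
Proof.
 intros [A Hconv].
 destruct (conv_q d T A Hconv (/4) ltac:(lra)) as [N0 HN0].
 set (n0 := Nat.max N0 1).
 assert (Hstep : forall z, exists j, (j < n0)%nat /\ a d T (S j) z <= q d A z + / 4 * (vnorm d z * vnorm d z)).
 { intros z. apply avg_exists. unfold n0; lia. specialize (HN0 n0 ltac:(unfold n0; lia) z).
   unfold Rn in HN0. unfold Rabs in HN0. destruct Rcase_abs in HN0; lra. }
 destruct (mat_bounded d A) as [K [HK HKA]].
 assert (Hq : forall z, q d A z <= K * (vnorm d z * vnorm d z)).
 { intros z. unfold q. eapply Rle_trans. 2: { assert (H := op_inner d A K z z HKA). rewrite Rmult_assoc in H. apply H. }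
   eapply Rle_trans; [apply Rle_abs| apply fst_le_Cnorm]. }
 destruct (pow_bounded_upto d T n0) as [C [HC1 HC]].
 set (D := 4 / 3 * K + 1).
 assert (Hmain : forall x m z, q d A z = q d A x -> vnorm d z * vnorm d z <= D * (vnorm d x * vnorm d x) ->
     vnorm d (it d T m z) * vnorm d (it d T m z) <= C * C * D * (vnorm d x * vnorm d x)).
 { intros x m. induction m as [m IH] using (well_founded_induction lt_wf). intros z Hqz Hz.
   assert (HX : 0 <= vnorm d x * vnorm d x) by (assert (H := vnorm_nonneg d x); nra).
   destruct (le_lt_dec m n0) as [Hm|Hm].
   - assert (H := HC m z Hm). assert (H0 := vnorm_nonneg d (it d T m z)). assert (H1 := vnorm_nonneg d z).
     assert (vnorm d (it d T m z) * vnorm d (it d T m z) <= C * C * (vnorm d z * vnorm d z)).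
     { replace (C * C * (vnorm d z * vnorm d z)) with ((C * vnorm d z) * (C * vnorm d z)) by ring.
       apply Rmult_le_compat; auto. }
     assert (0 <= C * C) by nra. nra.
   - destruct (Hstep z) as [j [Hj Hjz]].
     set (z' := it d T (S j) z).
     assert (Hq' : q d A z' = q d A x).
     { rewrite <- Hqz. unfold z'. generalize (S j) as k. intros k. induction k; auto. rewrite it_S, (q_inv d T A Hconv); auto. }
     assert (Hz' : vnorm d z' * vnorm d z' <= D * (vnorm d x * vnorm d x)).
     { unfold a in Hjz. fold z' in Hjz. rewrite Hqz in Hjz. specialize (Hq x). unfold D in *. nra. }
     replace m with ((m - S j) + S j)%nat by lia. rewrite it_add. fold z'.
     apply IH; auto. lia. }
 exists (C * sqrt D). intros m x. rewrite (vnorm_ext d _ _ (mpow_it d T m x)).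
 assert (HD : 1 <= D) by (unfold D; lra).
 apply sq_le. apply vnorm_nonneg. assert (H := vnorm_nonneg d x). assert (0 <= sqrt D) by apply sqrt_pos. apply Rmult_le_pos; [apply Rmult_le_pos|]; lra.
 replace (C * sqrt D * vnorm d x * (C * sqrt D * vnorm d x)) with (C * C * (sqrt D * sqrt D) * (vnorm d x * vnorm d x)) by ring.
 rewrite sqrt_sqrt by lra. apply Hmain; auto. assert (H := vnorm_nonneg d x). nra.
Qed.

Lemma small_inv e : e > 0 -> exists N, forall n, (n >= N)%nat -> / (INR n + 1) < e.
Proof. intros He. destruct (archimed (/ e)) as [H _].
 assert (0 < / e) by (apply Rinv_0_lt_compat; lra).
 exists (Z.to_nat (up (/ e))). intros n Hn.
 assert (IZR (up (/ e)) <= INR n).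
 { assert (0 <= up (/e))%Z by (apply le_IZR; lra).
   rewrite <- (Z2Nat.id (up (/e))) by lia. rewrite <- INR_IZR_INZ. apply le_INR. lia. }
 assert (Hp: 0 < INR n + 1) by (assert (H2 := pos_INR n); lra).
 rewrite <- (Rinv_inv e). apply Rinv_lt_contravar. apply Rmult_lt_0_compat; lra. lra. Qed.

Definition incr (p : nat -> nat) := forall n, (p n < p (S n))%nat.
Lemma incr_ge p : incr p -> forall n, (n <= p n)%nat.
Proof. intros H n. induction n. lia. specialize (H n). lia. Qed.
Lemma incr_mono p : incr p -> forall n m, (n <= m)%nat -> (p n <= p m)%nat.
Proof. intros H n m Hnm. induction Hnm. lia. specialize (H m). lia. Qed.
Lemma incr_comp p q : incr p -> incr q -> incr (fun n => p (q n)).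
Proof. intros Hp Hq n. assert (H := Hq n). assert (H2 := incr_mono p Hp (S (q n)) (q (S n)) H). specialize (Hp (q n)). unfold lt in *. lia. Qed.

Lemma pick {A : Type} (P : A -> Prop) : (exists x, P x) -> {x | P x}.
Proof. apply constructive_indefinite_description. Qed.

Lemma sub1 (w : nat -> R) B : (forall n, Rabs (w n) <= B) ->
  exists psi l, incr psi /\ forall e, e > 0 -> exists N, forall n, (n >= N)%nat -> Rabs (w (psi n) - l) < e.
Proof.
 intros HB. destruct (Bolzano_Weierstrass w (fun c => -B <= c <= B) (compact_P3 (-B) B)) as [l Hl].
 { intros n. specialize (HB n). unfold Rabs in HB; destruct Rcase_abs in HB; lra. }
 assert (Hf : forall N k, exists m, (N <= m)%nat /\ Rabs (w m - l) < / (INR k + 1)).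
 { intros N k. assert (Hpos : 0 < / (INR k + 1)) by (apply Rinv_0_lt_compat; assert (H2 := pos_INR k); lra).
   assert (Hnb : neighbourhood (disc l (mkposreal _ Hpos)) l) by (exists (mkposreal _ Hpos); intros y Hy; exact Hy).
   destruct (Hl (disc l (mkposreal _ Hpos)) N Hnb) as [p [Hp1 Hp2]].
   exists p. split; [exact Hp1| exact Hp2]. }
 set (f := fun N k => proj1_sig (pick _ (Hf N k))).
 assert (Hf1 : forall N k, (N <= f N k)%nat /\ Rabs (w (f N k) - l) < / (INR k + 1)).
 { intros. unfold f. destruct (pick _ (Hf N k)); simpl; auto. }
 set (psi := fix ps (n : nat) : nat := match n with O => f O O | S k => f (S (ps k)) (S k) end).
 exists psi, l. split.
 - intros n. simpl. destruct (Hf1 (S (psi n)) (S n)). lia.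
 - intros e He. destruct (small_inv e He) as [N HN]. exists N. intros n Hn.
   assert (Rabs (w (psi n) - l) < / (INR n + 1)). { destruct n; simpl; apply Hf1. }
   specialize (HN n Hn). lra.
Qed.

Lemma subK {I : Type} (cs : list I) (u : I -> nat -> R) B : (forall c n, Rabs (u c n) <= B) ->
  exists psi l, incr psi /\ forall e, e > 0 -> exists N, forall n, (n >= N)%nat -> forall c, In c cs -> Rabs (u c (psi n) - l c) < e.
Proof.
 intros HB. induction cs as [|c0 cs IH].
 - exists (fun n => n), (fun _ => 0). split. intros n; lia. intros e He. exists 0%nat. intros n _ c [].
 - destruct IH as [p1 [l1 [Hp1 H1]]].
   destruct (sub1 (fun n => u c0 (p1 n)) B) as [p2 [lc [Hp2 H2]]]. intros; apply HB.
   exists (fun n => p1 (p2 n)), (fun c => if excluded_middle_informative (c = c0) then lc else l1 c).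
   split. apply incr_comp; auto.
   intros e He. destruct (H1 e He) as [N1 HN1]. destruct (H2 e He) as [N2 HN2].
   exists (Nat.max N1 N2). intros n Hn c Hc.
   destruct (excluded_middle_informative (c = c0)) as [E|E].
   + subst. apply HN2. lia.
   + destruct Hc as [Hc|Hc]. congruence. apply HN1; auto. assert (H := incr_ge p2 Hp2 n). lia.
Qed.

Lemma csum_const n z : csum n (fun _ => z) = Cmul (RtoC (INR n)) z.
Proof. induction n. simpl. cring. cbn [csum]. rewrite IHn, S_INR. cring. Qed.

Lemma csum_telesc n u : csum n (fun k => Csub (u k) (u (S k))) = Csub (u 0%nat) (u n).
Proof. induction n; simpl. cring. rewrite IHn. cring. Qed.

Lemma csum_shift_diff n u : Csub (csum n (fun k => u (S k))) (csum n u) = Csub (u n) (u 0%nat).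
Proof. assert (H := csum_telesc n u). rewrite csum_sub in H.
 replace (Csub (csum n (fun k => u (S k))) (csum n u)) with (Copp (Csub (csum n u) (csum n (fun k => u (S k))))) by cring.
 rewrite H. cring. Qed.

Lemma telesc_bound w B n j : (forall k, Cnorm (w k) <= B) ->
  Cnorm (csum n (fun k => Csub (w k) (w (k + j)%nat))) <= 2 * INR j * B.
Proof. intros HB. induction j.
 - rewrite (csum_ext _ _ (fun _ => C0)). rewrite csum_zero, Cnorm_C0. simpl; lra.
   intros. rewrite Nat.add_0_r. cring.
 - rewrite (csum_ext _ _ (fun k => Cadd (Csub (w k) (w (k + j)%nat)) (Csub (w (k + j)%nat) (w (S k + j)%nat)))).
   2:{ intros. replace (k + S j)%nat with (S k + j)%nat by lia. cring. }
   rewrite csum_add. assert (Ht := csum_telesc n (fun k => w (k + j)%nat)). cbv beta in Ht. rewrite Ht. cbn [Nat.add].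
   eapply Rle_trans. apply Cnorm_add. eapply Rle_trans. apply Rplus_le_compat_l. apply Cnorm_sub.
   rewrite S_INR. specialize (HB j) as H1. specialize (HB (n + j)%nat) as H2. assert (2*(INR j+1)*B = 2*INR j*B + 2*B) by ring. lra. Qed.

Lemma scal_inv_const n p : (1 <= n)%nat -> Cmul (RtoC (/ INR n)) (csum n (fun _ => p)) = p.
Proof. intros Hn. rewrite csum_const. assert (0 < INR n) by (apply lt_0_INR; lia).
 apply Ceq; cunf; field; lra. Qed.

Lemma X1_eq w n m : (1 <= n)%nat -> (1 <= m)%nat ->
  Csub (Cmul (RtoC (/INR n)) (csum n w)) (Cmul (RtoC (/INR n)) (csum n (fun k => Cmul (RtoC (/INR m)) (csum m (fun i => w (k + S i)%nat)))))
  = Cmul (RtoC (/INR n * /INR m)) (csum m (fun i => csum n (fun k => Csub (w k) (w (k + S i)%nat)))).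
Proof. intros Hn Hm.
 rewrite (csum_ext m _ (fun i => Csub (csum n w) (csum n (fun k => w (k + S i)%nat)))) by (intros; apply csum_sub).
 rewrite csum_sub, csum_const, csum_swap, csum_scal.
 set (Sw := csum n w). set (SS := csum n (fun k => csum m (fun i => w (k + S i)%nat))).
 assert (0 < INR n) by (apply lt_0_INR; lia). assert (0 < INR m) by (apply lt_0_INR; lia).
 apply Ceq; cunf; field; lra. Qed.

Lemma Cnorm_le_parts z : Cnorm z <= Rabs (fst z) + Rabs (snd z).
Proof. unfold Cnorm. apply sqrt_le_sq. assert (H1 := Rabs_pos (fst z)). assert (H2 := Rabs_pos (snd z)). lra.
 assert (E1 : Rabs (fst z) * Rabs (fst z) = fst z * fst z) by (rewrite <- Rabs_mult; apply Rabs_right; apply Rle_ge, Rle_0_sqr).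
 assert (E2 : Rabs (snd z) * Rabs (snd z) = snd z * snd z) by (rewrite <- Rabs_mult; apply Rabs_right; apply Rle_ge, Rle_0_sqr).
 assert (0 <= Rabs (fst z) * Rabs (snd z)) by (apply Rmult_le_pos; apply Rabs_pos). nra. Qed.

Definition coords (d : nat) : list (nat * nat * bool) :=
  flat_map (fun i => flat_map (fun j => (i, j, true) :: (i, j, false) :: nil) (seq 0 d)) (seq 0 d).
Lemma in_coords d i j b : (i < d)%nat -> (j < d)%nat -> In (i, j, b) (coords d).
Proof. intros Hi Hj. unfold coords. apply in_flat_map. exists i. split. apply in_seq; lia.
 apply in_flat_map. exists j. split. apply in_seq; lia. destruct b; simpl; auto. Qed.

Section Erg.
Variable d : nat.
Variable T : Mat.
Variable M : R.
Hypothesis HM1 : 1 <= M.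
Hypothesis HM : forall k x, vnorm d (it d T k x) <= M * vnorm d x.

Lemma v_bound k x y : Cnorm (inner d (it d T k x) (it d T k y)) <= M * M * vnorm d x * vnorm d y.
Proof. eapply Rle_trans. apply inner_cs. assert (H1 := vnorm_nonneg d x). assert (H2 := vnorm_nonneg d y).
 replace (M * M * vnorm d x * vnorm d y) with ((M * vnorm d x) * (M * vnorm d y)) by ring.
 apply Rmult_le_compat; auto using vnorm_nonneg. Qed.

Lemma B_nonneg x y : 0 <= M * M * vnorm d x * vnorm d y.
Proof. assert (H1 := vnorm_nonneg d x). assert (H2 := vnorm_nonneg d y).
 apply Rmult_le_pos; [apply Rmult_le_pos|]; auto. apply Rmult_le_pos; lra. Qed.

Lemma avg_bound n (f : nat -> Cplx) c : (forall k, (k < n)%nat -> Cnorm (f k) <= c) -> 0 <= c ->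
  Cnorm (Cmul (RtoC (/ INR n)) (csum n f)) <= c.
Proof. intros Hf Hc. destruct n. simpl. rewrite (Cnorm_mul _ C0), Cnorm_C0. lra.
 rewrite Cnorm_mul, Cnorm_RtoC. assert (0 < INR (S n)) by (apply lt_0_INR; lia).
 rewrite Rabs_right by (apply Rle_ge, Rlt_le, Rinv_0_lt_compat; lra).
 eapply Rle_trans. apply Rmult_le_compat_l. apply Rlt_le, Rinv_0_lt_compat; lra.
 eapply Rle_trans. apply Cnorm_csum. apply (rsum_le _ _ (fun _ => c)). apply Hf.
 rewrite rsum_const. right. field. lra. Qed.

Lemma gam_bound n x y : Cnorm (gam d T n x y) <= M * M * vnorm d x * vnorm d y.
Proof. unfold gam. apply avg_bound. intros. apply v_bound. apply B_nonneg. Qed.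

Lemma cluster : exists P : Mat, forall e, e > 0 -> forall N, exists m, (m >= N)%nat /\
  forall x y, Cnorm (Csub (gam d T m x y) (inner d (mat_vec d P x) y)) <= e * vnorm d x * vnorm d y.
Proof.
 set (u := fun (c : nat * nat * bool) m => let '(i, j, b) := c in
   if (Nat.ltb i d && Nat.ltb j d)%bool then (if b then fst (cesaro d T m i j) else snd (cesaro d T m i j)) else 0).
 assert (Hu : forall c m, Rabs (u c m) <= M * M).
 { intros [[i j] b] m. unfold u. destruct (Nat.ltb i d) eqn:Ei; destruct (Nat.ltb j d) eqn:Ej; cbn [andb];
   try (rewrite Rabs_R0; nra).
   apply Nat.ltb_lt in Ei. apply Nat.ltb_lt in Ej.
   assert (H : Cnorm (cesaro d T m i j) <= M * M).
   { rewrite <- (entry d) by auto. rewrite cesaro_inner. eapply Rle_trans. apply gam_bound. rewrite !vnorm_ev by auto. lra. }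
   destruct b. eapply Rle_trans; [apply fst_le_Cnorm|auto]. eapply Rle_trans; [apply snd_le_Cnorm|auto]. }
 destruct (subK (coords d) u (M * M) Hu) as [psi [l [Hpsi Hl]]].
 exists (fun i j => (l (i, j, true), l (i, j, false))).
 intros e He N.
 set (e' := e / (2 * (INR d * INR d) + 1)).
 assert (Hdd : 0 <= INR d * INR d) by (assert (H := pos_INR d); nra).
 assert (He' : e' > 0) by (unfold e'; apply Rdiv_lt_0_compat; lra).
 destruct (Hl e' He') as [N1 HN1].
 exists (psi (Nat.max N N1)). split. assert (H := incr_ge psi Hpsi (Nat.max N N1)). lia.
 intros x y. specialize (HN1 (Nat.max N N1) ltac:(lia)).
 rewrite <- cesaro_inner, <- inner_msub.
 eapply Rle_trans. apply (entry_bound d _ (2 * e')).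
 - intros i j Hi Hj. unfold msub. eapply Rle_trans. apply Cnorm_le_parts.
   assert (H1 := HN1 (i, j, true) (in_coords d i j true Hi Hj)).
   assert (H2 := HN1 (i, j, false) (in_coords d i j false Hi Hj)).
   unfold u in H1, H2. replace (Nat.ltb i d) with true in H1, H2 by (symmetry; apply Nat.ltb_lt; auto).
   replace (Nat.ltb j d) with true in H1, H2 by (symmetry; apply Nat.ltb_lt; auto). cbn [andb] in H1, H2.
   unfold Csub, Cadd, Copp. cbn [fst snd]. unfold Rminus in H1, H2. lra.
 - assert (H1 := vnorm_nonneg d x). assert (H2 := vnorm_nonneg d y).
   assert (INR d * INR d * (2 * e') <= e).
   { unfold e'. apply Rmult_le_reg_r with (2 * (INR d * INR d) + 1). lra.
     replace (INR d * INR d * (2 * (e / (2 * (INR d * INR d) + 1))) * (2 * (INR d * INR d) + 1)) with (2 * (INR d * INR d) * e)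
       by (field; lra). nra. }
   repeat apply Rmult_le_compat_r; auto.
Qed.

End Erg.

Section Erg2.
Variable d : nat.
Variable T : Mat.
Variable M : R.
Hypothesis HM1 : 1 <= M.
Hypothesis HM : forall k x, vnorm d (it d T k x) <= M * vnorm d x.
Variable P : Mat.
Hypothesis HP : forall e, e > 0 -> forall N, exists m, (m >= N)%nat /\
  forall x y, Cnorm (Csub (gam d T m x y) (inner d (mat_vec d P x) y)) <= e * vnorm d x * vnorm d y.

Definition pi x y := inner d (mat_vec d P x) y.

Lemma gam_T m x y : (1 <= m)%nat -> Csub (gam d T m (mat_vec d T x) (mat_vec d T y)) (gam d T m x y)
  = Cmul (RtoC (/ INR m)) (Csub (inner d (it d T (S m) x) (it d T (S m) y)) (inner d (it d T 1 x) (it d T 1 y))).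
Proof. intros Hm. unfold gam.
 rewrite (csum_ext m (fun k => inner d (it d T (S k) (mat_vec d T x)) (it d T (S k) (mat_vec d T y)))
   (fun k => (fun j => inner d (it d T (S j) x) (it d T (S j) y)) (S k))) by (intros; cbv beta; rewrite <- !it_S_r; auto).
 rewrite <- (csum_shift_diff m (fun j => inner d (it d T (S j) x) (it d T (S j) y))). cring. Qed.

Lemma pi_inv x y : pi (mat_vec d T x) (mat_vec d T y) = pi x y.
Proof.
 apply (Cnorm_small_eq _ _ (4 * (M * M * vnorm d x * vnorm d y))). intros e He.
 destruct (small_inv e He) as [N HN]. destruct (HP e He (S N)) as [m [Hm Hc]].
 assert (HB := B_nonneg d M HM1 x y). assert (Hx := vnorm_nonneg d x). assert (Hy := vnorm_nonneg d y).
 assert (HTx : vnorm d (mat_vec d T x) <= M * vnorm d x) by apply (HM 1).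
 assert (HTy : vnorm d (mat_vec d T y) <= M * vnorm d y) by apply (HM 1).
 assert (H1 := Hc (mat_vec d T x) (mat_vec d T y)). assert (H3 := Hc x y).
 assert (H2 : Cnorm (Csub (gam d T m (mat_vec d T x) (mat_vec d T y)) (gam d T m x y)) <= e * (2 * (M * M * vnorm d x * vnorm d y))).
 { rewrite gam_T by lia. rewrite Cnorm_mul, Cnorm_RtoC.
   assert (Hm0 : 0 < INR m) by (apply lt_0_INR; lia).
   rewrite Rabs_right by (apply Rle_ge, Rlt_le, Rinv_0_lt_compat; lra).
   assert (Hinv : / INR m < e). { replace m with (S (m - 1)) by lia. rewrite S_INR. apply HN. lia. }
   assert (Cnorm (Csub (inner d (it d T (S m) x) (it d T (S m) y)) (inner d (it d T 1 x) (it d T 1 y))) <= 2 * (M * M * vnorm d x * vnorm d y)).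
   { eapply Rle_trans. apply Cnorm_sub. assert (H4 := v_bound d T M HM (S m) x y). assert (H5 := v_bound d T M HM 1 x y). lra. }
   apply Rmult_le_compat; auto. apply Rlt_le, Rinv_0_lt_compat; lra. apply Cnorm_nonneg. lra. }
 unfold pi.
 eapply Rle_trans. apply (Cnorm_tri _ (gam d T m (mat_vec d T x) (mat_vec d T y))).
 rewrite Cnorm_sub_sym. eapply Rle_trans. apply Rplus_le_compat_l. apply (Cnorm_tri _ (gam d T m x y)).
 assert (e * vnorm d (mat_vec d T x) * vnorm d (mat_vec d T y) <= e * (M * M * vnorm d x * vnorm d y)).
 { replace (e * (M * M * vnorm d x * vnorm d y)) with (e * (M * vnorm d x) * (M * vnorm d y)) by ring.
   apply Rmult_le_compat; try apply vnorm_nonneg; auto. apply Rmult_le_pos. lra. apply vnorm_nonneg.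
   apply Rmult_le_compat_l; auto. lra. }
 assert (e * vnorm d x * vnorm d y <= e * (M * M * vnorm d x * vnorm d y)).
 { rewrite !Rmult_assoc. apply Rmult_le_compat_l. lra.
   assert (0 <= vnorm d x * vnorm d y) by (apply Rmult_le_pos; auto).
   replace (M * (M * (vnorm d x * vnorm d y))) with ((M * M) * (vnorm d x * vnorm d y)) by ring.
   assert (1 <= M * M) by nra. nra. }
 assert (e * (4 * (M * M * vnorm d x * vnorm d y)) = e * (M * M * vnorm d x * vnorm d y) * 4) by ring.
 assert (e * (2 * (M * M * vnorm d x * vnorm d y)) = e * (M * M * vnorm d x * vnorm d y) * 2) by ring.
 lra.
Qed.

Lemma pi_inv_it k x y : pi (it d T k x) (it d T k y) = pi x y.
Proof. induction k. reflexivity. rewrite !it_S, pi_inv. auto. Qed.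

End Erg2.

Section Erg3.
Variable d : nat.
Variable T : Mat.
Variable M : R.
Hypothesis HM1 : 1 <= M.
Hypothesis HM : forall k x, vnorm d (it d T k x) <= M * vnorm d x.
Variable P : Mat.
Hypothesis HP : forall e, e > 0 -> forall N, exists m, (m >= N)%nat /\
  forall x y, Cnorm (Csub (gam d T m x y) (inner d (mat_vec d P x) y)) <= e * vnorm d x * vnorm d y.

Lemma gam_shift m k x y : gam d T m (it d T (S k) x) (it d T (S k) y) =
  Cmul (RtoC (/ INR m)) (csum m (fun i => (fun j => inner d (it d T (S j) x) (it d T (S j) y)) (k + S i)%nat)).
Proof. unfold gam. f_equal. apply csum_ext. intros i _. cbv beta. rewrite <- !it_add.
 replace (S i + S k)%nat with (S (k + S i)) by lia. auto. Qed.

Lemma converge : forall e, e > 0 -> exists N, forall n, (n >= N)%nat -> forall x y,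
  Cnorm (Csub (gam d T n x y) (inner d (mat_vec d P x) y)) <= e * vnorm d x * vnorm d y.
Proof.
 intros e He. set (e1 := e / (2 * (M * M))).
 assert (HMM : 1 <= M * M) by nra.
 assert (He1 : e1 > 0) by (unfold e1; apply Rdiv_lt_0_compat; lra).
 destruct (HP e1 He1 1%nat) as [m [Hm1 Hm]].
 assert (Hm0 : 0 < INR m) by (apply lt_0_INR; lia).
 destruct (small_inv (e1 / (2 * INR m)) ltac:(apply Rdiv_lt_0_compat; lra)) as [N0 HN0].
 exists (S N0). intros n Hn x y.
 assert (Hn0 : 0 < INR n) by (apply lt_0_INR; lia).
 assert (Hinv : / INR n < e1 / (2 * INR m)). { replace n with (S (n - 1)) by lia. rewrite S_INR. apply HN0. lia. }
 set (B := M * M * vnorm d x * vnorm d y). assert (HB : 0 <= B) by apply (B_nonneg d M HM1).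
 set (w := fun j => inner d (it d T (S j) x) (it d T (S j) y)).
 set (p := inner d (mat_vec d P x) y).
 set (G := fun k => gam d T m (it d T (S k) x) (it d T (S k) y)).
 assert (Hsplit : Csub (gam d T n x y) p =
   Cadd (Csub (gam d T n x y) (Cmul (RtoC (/ INR n)) (csum n G)))
        (Cmul (RtoC (/ INR n)) (csum n (fun k => Csub (G k) p)))).
 { rewrite csum_sub, <- (scal_inv_const n p) at 1 by lia. cring. }
 rewrite Hsplit. eapply Rle_trans. apply Cnorm_add.
 assert (HX2 : Cnorm (Cmul (RtoC (/ INR n)) (csum n (fun k => Csub (G k) p))) <= e1 * B).
 { apply avg_bound. 2: { apply Rmult_le_pos; lra. }
   intros k _. unfold G, p. change (inner d (mat_vec d P x) y) with (pi d P x y). rewrite <- (pi_inv_it d T M HM1 HM P HP (S k) x y). unfold pi.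
   eapply Rle_trans. apply Hm. unfold B.
   replace (e1 * (M * M * vnorm d x * vnorm d y)) with (e1 * (M * vnorm d x) * (M * vnorm d y)) by ring.
   assert (Hx := vnorm_nonneg d x). assert (Hy := vnorm_nonneg d y).
   apply Rmult_le_compat; try apply vnorm_nonneg; auto. apply Rmult_le_pos. lra. apply vnorm_nonneg.
   apply Rmult_le_compat_l; auto. lra. }
 assert (HX1 : Cnorm (Csub (gam d T n x y) (Cmul (RtoC (/ INR n)) (csum n G))) <= e1 * B).
 { unfold G. rewrite (csum_ext n _ (fun k => Cmul (RtoC (/ INR m)) (csum m (fun i => w (k + S i)%nat)))) by (intros; apply gam_shift).
   unfold gam. fold w. rewrite X1_eq by lia.
   rewrite Cnorm_mul, Cnorm_RtoC. rewrite Rabs_right.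
   2: { apply Rle_ge, Rmult_le_pos; apply Rlt_le, Rinv_0_lt_compat; lra. }
   assert (Hw : forall k, Cnorm (w k) <= B) by (intros; apply v_bound; auto).
   assert (Hs : Cnorm (csum m (fun i => csum n (fun k => Csub (w k) (w (k + S i)%nat)))) <= INR m * (2 * INR m * B)).
   { eapply Rle_trans. apply Cnorm_csum. rewrite <- rsum_const. apply rsum_le. intros i Hi.
     eapply Rle_trans. apply telesc_bound. apply Hw. apply Rmult_le_compat_r; auto. apply Rmult_le_compat_l. lra.
     apply le_INR. lia. }
   eapply Rle_trans. apply Rmult_le_compat_l. apply Rmult_le_pos; apply Rlt_le, Rinv_0_lt_compat; lra. apply Hs.
   replace (/ INR n * / INR m * (INR m * (2 * INR m * B))) with (/ INR n * (2 * INR m) * B) by (field; lra).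
   apply Rmult_le_compat_r; auto.
   apply Rmult_le_reg_r with (/ (2 * INR m)). apply Rinv_0_lt_compat; lra.
   replace (/ INR n * (2 * INR m) * / (2 * INR m)) with (/ INR n) by (field; lra). unfold Rdiv in Hinv. lra. }
 assert (e1 * B + e1 * B = e * vnorm d x * vnorm d y).
 { unfold e1, B. field. lra. }
 lra.
Qed.

End Erg3.

Section BL.
Variable L : (nat -> Cplx) -> Cplx.
Hypothesis HL : BanachLimit L.

Lemma L_const c : L (fun _ => c) = c.
Proof. apply (bl_limit L HL). intros eps He. exists 0%nat. intros. replace (Csub c c) with C0 by cring. rewrite Cnorm_C0. lra. Qed.

Lemma bounded_const c : bounded_seq (fun _ => c).
Proof. exists (Cnorm c). intros; lra. Qed.
Lemma bounded_add s t : bounded_seq s -> bounded_seq t -> bounded_seq (fun n => Cadd (s n) (t n)).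
Proof. intros [A HA] [B HB]. exists (A + B). intros n. eapply Rle_trans. apply Cnorm_add. specialize (HA n); specialize (HB n); lra. Qed.
Lemma bounded_scal a s : bounded_seq s -> bounded_seq (fun n => Cmul a (s n)).
Proof. intros [A HA]. exists (Cnorm a * A). intros n. rewrite Cnorm_mul. apply Rmult_le_compat_l. apply Cnorm_nonneg. auto. Qed.

Lemma L_add s t : bounded_seq s -> bounded_seq t -> L (fun n => Cadd (s n) (t n)) = Cadd (L s) (L t).
Proof. intros Hs Ht. assert (H := bl_linear L HL C1 s t Hs Ht).
 replace (fun n => Cadd (Cmul C1 (s n)) (t n)) with (fun n => Cadd (s n) (t n)) in H by (extensionality n; cring).
 rewrite H. cring. Qed.
Lemma L_scal a s : bounded_seq s -> L (fun n => Cmul a (s n)) = Cmul a (L s).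
Proof. intros Hs. assert (H := bl_linear L HL a s (fun _ => C0) Hs (bounded_const C0)). cbv beta in H.
 replace (fun n => Cadd (Cmul a (s n)) C0) with (fun n => Cmul a (s n)) in H by (extensionality n; cring).
 rewrite H, L_const. cring. Qed.

Lemma bounded_csum N (f : nat -> nat -> Cplx) : (forall k, bounded_seq (f k)) -> bounded_seq (fun n => csum N (fun k => f k n)).
Proof. intros H. induction N. simpl. apply bounded_const. simpl. apply bounded_add; auto. Qed.

Lemma L_csum N (f : nat -> nat -> Cplx) : (forall k, bounded_seq (f k)) ->
  L (fun n => csum N (fun k => f k n)) = csum N (fun k => L (f k)).
Proof. intros H. induction N. simpl. apply L_const. simpl. rewrite L_add; auto. rewrite IHN. auto.
 apply bounded_csum; auto. Qed.

Lemma L_shift s k : bounded_seq s -> L (fun n => s (n + k)%nat) = L s.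
Proof. intros Hs. induction k.
 - replace (fun n => s (n + 0)%nat) with s by (extensionality n; rewrite Nat.add_0_r; auto). auto.
 - assert (Hb : bounded_seq (fun m => s (m + k)%nat)) by (destruct Hs as [B HB]; exists B; auto).
   assert (H := bl_shift L HL _ Hb). cbv beta in H.
   replace (fun n => s (n + S k)%nat) with (fun n => s (S n + k)%nat) by (extensionality n; f_equal; lia).
   rewrite H. auto. Qed.
End BL.

Theorem forward d T : power_bounded d T ->
  exists ATC : Mat,
    mat_cv_norm d (cesaro d T) ATC /\
    (forall L : (nat -> Cplx) -> Cplx, BanachLimit L ->
       forall x y : Vec,
         L (fun n => inner d (mat_vec d (mmul d (mpow d (madj T) n) (mpow d T n)) x) y)
         = inner d (mat_vec d ATC x) y).
Proof.
 intros [M0 HM0]. set (M := Rabs M0 + 1).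
 assert (HM1 : 1 <= M) by (unfold M; assert (H := Rabs_pos M0); lra).
 assert (HM : forall k x, vnorm d (it d T k x) <= M * vnorm d x).
 { intros k x. rewrite <- (vnorm_ext d _ _ (mpow_it d T k x)). eapply Rle_trans. apply HM0.
   apply Rmult_le_compat_r. apply vnorm_nonneg. unfold M. assert (H := Rle_abs M0). lra. }
 destruct (cluster d T M HM1 HM) as [P HP].
 assert (Hconv := converge d T M HM1 HM P HP).
 exists P. split.
 - intros eps He. destruct (Hconv eps He) as [N HN]. exists N. intros n Hn.
   apply form_to_op. lra. intros x y. rewrite inner_msub, cesaro_inner. apply HN; auto.
 - intros L HL x y.
   replace (fun n => inner d (mat_vec d (mmul d (mpow d (madj T) n) (mpow d T n)) x) y)
     with (fun n => inner d (it d T n x) (it d T n y)) by (extensionality n; symmetry; apply key_inner).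
   set (s := fun n => inner d (it d T n x) (it d T n y)).
   set (B := M * M * vnorm d x * vnorm d y).
   assert (Hs : bounded_seq s) by (exists B; intros; apply v_bound; auto).
   set (p := inner d (mat_vec d P x) y).
   apply (Cnorm_small_eq _ _ B). intros e He.
   destruct (Hconv e He) as [N HN]. set (N1 := Nat.max N 1). specialize (HN N1 ltac:(lia)).
   set (w := fun n => gam d T N1 (it d T n x) (it d T n y)).
   assert (Hw : forall n, w n = Cmul (RtoC (/ INR N1)) (csum N1 (fun k => (fun m => s (m + S k)%nat) n))).
   { intros n. unfold w, gam, s. f_equal. apply csum_ext. intros k _. rewrite (Nat.add_comm n (S k)), !it_add. auto. }
   assert (Hsk : forall k, bounded_seq (fun m => s (m + S k)%nat)).
   { intros k. destruct Hs as [C HC]. exists C. auto. }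
   assert (HLw : L w = L s).
   { replace w with (fun n => Cmul (RtoC (/ INR N1)) (csum N1 (fun k => (fun m => s (m + S k)%nat) n))) by (extensionality n; rewrite Hw; auto).
     rewrite (L_scal L HL); [|apply bounded_csum; auto].
     rewrite (L_csum L HL) by auto. rewrite (csum_ext _ _ (fun _ => L s)) by (intros; apply L_shift; auto).
     apply scal_inv_const. lia. }
   assert (Hwb : bounded_seq w).
   { exists (M * M * (M * vnorm d x) * (M * vnorm d y)). intros n. unfold w. eapply Rle_trans. apply (gam_bound d T M HM1 HM).
     assert (H1 := HM n x). assert (H2 := HM n y). assert (0 <= M * M) by nra.
     assert (Hx0 := vnorm_nonneg d (it d T n x)). assert (Hy0 := vnorm_nonneg d (it d T n y)).
     apply Rmult_le_compat; auto. apply Rmult_le_pos; auto. apply Rmult_le_compat_l; auto. }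
   assert (Hdiff : L (fun n => Cadd (Cmul C1 (w n)) ((fun _ => Copp p) n)) = Csub (L s) p).
   { rewrite (bl_linear L HL C1 w (fun _ => Copp p) Hwb (bounded_const _)). rewrite HLw, (L_const L HL). cring. }
   rewrite <- Hdiff. apply (bl_norm L HL). intros n. cbv beta.
   replace (Cadd (Cmul C1 (w n)) (Copp p)) with (Csub (w n) p) by cring.
   unfold w, p. change (inner d (mat_vec d P x) y) with (pi d P x y).
   rewrite <- (pi_inv_it d T M HM1 HM P HP n x y). unfold pi.
   eapply Rle_trans. apply HN. unfold B.
   replace (e * (M * M * vnorm d x * vnorm d y)) with (e * (M * vnorm d x) * (M * vnorm d y)) by ring.
   apply Rmult_le_compat; try apply vnorm_nonneg; auto. apply Rmult_le_pos. lra. apply vnorm_nonneg.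
   apply Rmult_le_compat_l; auto. lra.
Qed.

Theorem mainTheorem6 (d : nat) :
  (forall T : Mat, power_bounded d T ->
     exists ATC : Mat,
       mat_cv_norm d (cesaro d T) ATC /\
       (forall L : (nat -> Cplx) -> Cplx, BanachLimit L ->
          forall x y : Vec,
            L (fun n => inner d (mat_vec d (mmul d (mpow d (madj T) n) (mpow d T n)) x) y)
            = inner d (mat_vec d ATC x) y)) /\
  (forall T : Mat, (exists A : Mat, mat_cv_norm d (cesaro d T) A) ->
     power_bounded d T).
Proof. split. apply forward. apply converse. Qed.
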